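(* Let $\mathcal{A}=(Q,\Sigma,\delta)$ be a strongly connected DFA with $n$ states, let $P$ be a positive probability distribution on $\Sigma$, and let $\alpha$ be a stationary distribution of the Markov chain of $\mathcal{A}$ under $P$, i.e. a stochastic vector with $\alpha\sum_{a\in\Sigma}P(a)[a]=\alpha$. Then $\mathcal{A}$ is synchronizing if and only if there exists a set of words $W\subseteq\Sigma^*$ which is complete for $\mathbb{R}^n$ with respect to $\alpha$.
   Context: A DFA $\mathcal{A}=(Q,\Sigma,\delta)$ has a finite state set $Q=\{1,\dots,n\}$, finite alphabet $\Sigma$ and total transition function, extended to words; $q.w=\delta(q,w)$. It is synchronizing if some word $w$ satisfies $|Q.w|=1$. It is strongly connected if every state is reachable from every state. Vectors are row vectors; $[q]\in\mathbb{R}^n$ is the standard basis vector of state $q$; for a word $w$, $[w]$ is the $n\times n$ 0-1 matrix with $[w]_{p,q}=1$ iff $p.w=q$. A stochastic vector is a non-negative vector whose entries sum to $1$. A set of words $W$ is complete for a subspace $V\le\mathbb{R}^n$ with respect to $g\in V$ if $\langle g[w]\mid w\in W\rangle=V$. *)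

(* Defs.v *)
From HB Require Import structures.
From mathcomp Require Import all_boot all_order all_algebra.
Set Implicit Arguments. Unset Strict Implicit. Unset Printing Implicit Defensive.
Import Order.TTheory GRing.Theory Num.Theory.
Local Open Scope ring_scope.

(* A DFA with state set 'I_n (states 1..n of the paper, 0-indexed here),
   finite alphabet Sigma and total transition function delta. *)

Definition dact (n : nat) (Sigma : finType) (delta : 'I_n -> Sigma -> 'I_n)
  (q : 'I_n) (w : seq Sigma) : 'I_n := foldl delta q w.

Definition synchronizing (n : nat) (Sigma : finType)
  (delta : 'I_n -> Sigma -> 'I_n) : Prop :=
  exists w : seq Sigma, #|[set dact delta q w | q : 'I_n]| = 1%N.

Definition strongly_connected (n : nat) (Sigma : finType)
  (delta : 'I_n -> Sigma -> 'I_n) : Prop :=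
  forall p q : 'I_n, exists w : seq Sigma, dact delta p w = q.

Definition wmx (R : nzRingType) (n : nat) (Sigma : finType)
  (delta : 'I_n -> Sigma -> 'I_n) (w : seq Sigma) : 'M[R]_n :=
  \matrix_(p < n, q < n) (dact delta p w == q)%:R.

Definition stochastic (R : numDomainType) (n : nat) (v : 'rV[R]_n) : Prop :=
  (forall i, 0 <= v 0 i) /\ \sum_(i < n) v 0 i = 1.

Definition pos_distribution (R : numDomainType) (Sigma : finType)
  (P : Sigma -> R) : Prop :=
  (forall a, 0 < P a) /\ \sum_(a : Sigma) P a = 1.

Definition complete_for_full (R : nzRingType) (n : nat) (Sigma : finType)
  (delta : 'I_n -> Sigma -> 'I_n) (W : pred (seq Sigma)) (g : 'rV[R]_n) : Prop :=
  forall v : 'rV[R]_n, exists (s : seq (seq Sigma)) (c : seq R),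
    all W s /\ size c = size s /\
    v = \sum_(i < size s) c`_i *: (g *m wmx R delta (nth [::] s i)).

(* Main.v *)
Require Import Defs.
From HB Require Import structures.
From mathcomp Require Import all_boot all_order all_algebra.
From Stdlib Require Import Classical ClassicalEpsilon.
Set Implicit Arguments. Unset Strict Implicit. Unset Printing Implicit Defensive.
Import Order.TTheory GRing.Theory Num.Theory.
Local Open Scope ring_scope.

Lemma exists_max (I : finType) (R : realDomainType) (Pr : I -> Prop) (f : I -> R) i0 :
  Pr i0 -> exists i, Pr i /\ forall j, Pr j -> f j <= f i.
Proof.
move=> H0.
pose pb := fun i => if excluded_middle_informative (Pr i) then true else false.
have pbP : forall i, pb i <-> Pr i.
  by move=> i; rewrite /pb; case: excluded_middle_informative.
have : pb i0 by apply/pbP.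
move=> Hb; case: (arg_maxP f Hb) => i Hi Hm.
exists i; split; first by apply/pbP.
by move=> j /pbP Hj; apply: Hm.
Qed.

Definition pre n (Sigma : finType) (delta : 'I_n -> Sigma -> 'I_n)
  (T : {set 'I_n}) (w : seq Sigma) : {set 'I_n} :=
  [set p | dact delta p w \in T].

Definition chi (R : nzRingType) n (T : {set 'I_n}) : 'cV[R]_n :=
  \col_q (q \in T)%:R.

Lemma wmx_chi (R : nzRingType) n (Sigma : finType) (delta : 'I_n -> Sigma -> 'I_n) w T :
  wmx R delta w *m chi R T = chi R (pre delta T w).
Proof.
apply/matrixP => p j; rewrite !mxE (bigD1 (dact delta p w)) //= big1 ?addr0.
  by rewrite !mxE eqxx mul1r inE.
by move=> q /negbTE Hq; rewrite !mxE eq_sym Hq mul0r.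
Qed.

Lemma pre_cons n (Sigma : finType) (delta : 'I_n -> Sigma -> 'I_n) T a w :
  pre delta T (a :: w) = pre delta (pre delta T w) [:: a].
Proof. by apply/setP => p; rewrite !inE. Qed.

Lemma pre_rcons n (Sigma : finType) (delta : 'I_n -> Sigma -> 'I_n) T a w :
  pre delta (pre delta T [:: a]) w = pre delta T (rcons w a).
Proof. by apply/setP => p; rewrite !inE /dact -cats1 foldl_cat. Qed.

Lemma pre_setT n (Sigma : finType) (delta : 'I_n -> Sigma -> 'I_n) w :
  pre delta setT w = setT.
Proof. by apply/setP => p; rewrite !inE. Qed.

Lemma fE (R : nzRingType) n (alpha : 'rV[R]_n) T :
  (alpha *m chi R T) 0 0 = \sum_(j in T) alpha 0 j.
Proof.
rewrite mxE [RHS]big_mkcond; apply: eq_bigr => j _; rewrite mxE.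
by case: (j \in T); rewrite ?mulr1 ?mulr0.
Qed.

Lemma key (R : realFieldType) (n : nat) (Sigma : finType)
  (delta : 'I_n -> Sigma -> 'I_n) (P : Sigma -> R) (alpha : 'rV[R]_n) :
  pos_distribution P ->
  stochastic alpha ->
  alpha *m (\sum_(a : Sigma) P a *: wmx R delta [:: a]) = alpha ->
  ~ synchronizing delta ->
  exists (x : 'cV[R]_n) (q1 : 'I_n), x q1 0 != 0 /\
     forall w, alpha *m wmx R delta w *m x = 0.
Proof.
move=> [HPpos HP1] [Hal0 Hal1] Hst Hns.
pose f : {set 'I_n} -> R := fun T => (alpha *m chi R T) 0 0.
have hstat : forall T, f T = \sum_a P a * f (pre delta T [:: a]).
  move=> T; rewrite /f -{1}Hst mulmx_sumr mulmx_suml summxE.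
  apply: eq_bigr => a _.
  by rewrite -scalemxAr -scalemxAl -mulmxA wmx_chi mxE.
have n_gt0 : (0 < n)%N.
  rewrite lt0n; apply/negP => /eqP n0; move: Hal1; subst n.
  by rewrite big_ord0 => /eqP; rewrite eq_sym oner_eq0.
pose i0 := Ordinal n_gt0.
pose PF T := forall w, pre delta T w != setT.
have PF1 : forall q, PF [set q].
  move=> q w; apply/negP => /eqP Hw; apply: Hns; exists w.
  apply/eqP/cards1P; exists q; apply/setP => j; rewrite !inE.
  apply/imsetP/eqP => [[p _ ->]|->].
    have : p \in pre delta [set q] w by rewrite Hw inE.
    by rewrite inE => /set1P.
  exists i0 => //; have : i0 \in pre delta [set q] w by rewrite Hw inE.
  by rewrite inE => /set1P.
have [T0 [HT0 Hmax]] := exists_max f (PF1 i0).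
pose M T := PF T /\ f T = f T0.
have Mstep : forall T a, M T -> M (pre delta T [:: a]).
  move=> T a [HT HfT]; split.
    by move=> w; rewrite pre_rcons.
  have Hle : forall b, f (pre delta T [:: b]) <= f T.
    by move=> b; rewrite HfT; apply: Hmax => w; rewrite pre_rcons.
  have : \sum_b P b * (f T - f (pre delta T [:: b])) = 0.
    rewrite (eq_bigr (fun b => P b * f T - P b * f (pre delta T [:: b]))); last first.
      by move=> b _; rewrite mulrBr.
    by rewrite sumrB -mulr_suml HP1 mul1r -hstat subrr.
  have Hnn : forall b, true -> 0 <= P b * (f T - f (pre delta T [:: b])).
    by move=> b _; apply: mulr_ge0; [exact: ltW | rewrite subr_ge0; exact: Hle].
  move/(psumr_eq0P Hnn) => H.
  have /eqP := H a isT.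
  rewrite mulf_eq0 (negbTE (lt0r_neq0 (HPpos a))) /= subr_eq0 => /eqP <-.
  exact: HfT.
have Mw : forall w T, M T -> M (pre delta T w).
  elim=> [|a w IH] T HT.
    by have -> : pre delta T [::] = T by apply/setP => p; rewrite inE.
  by rewrite pre_cons; apply: Mstep; apply: IH.
pose t := f T0.
have HT0s : T0 != setT.
  by have := HT0 [::]; have -> : pre delta T0 [::] = T0 by apply/setP => p; rewrite inE.
have [q1 Hq1] : exists q1, q1 \notin T0.
  case: (pickP (fun q => q \notin T0)) => [q1 Hq1 | Hall]; first by exists q1.
  exfalso; move/negP: HT0s; apply; apply/eqP/setP => q.
  by rewrite inE; have := Hall q => /negbFE.
have tn0 : t != 0.
  apply/eqP => t0.
  have : \sum_(i < n) alpha 0 i <= 0.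
    apply: sumr_le0 => j _.
    have -> : alpha 0 j = f [set j] by rewrite /f fE big_set1.
    by rewrite -t0; apply: Hmax.
  by rewrite Hal1 ler10.
exists (chi R T0 - t *: chi R setT), q1; split.
  by rewrite !mxE (negbTE Hq1) inE mulr1 sub0r oppr_eq0.
move=> w; rewrite -mulmxA mulmxBr -scalemxAr !wmx_chi pre_setT mulmxBr -scalemxAr.
have [_ Hw] := Mw w T0 (conj HT0 erefl).
have h1 : (alpha *m chi R setT) 0 0 = 1.
  by rewrite fE -Hal1; apply: eq_bigl => j; rewrite inE.
move: Hw h1; rewrite /f.
set A := alpha *m chi R (pre delta T0 w); set B := alpha *m chi R setT.
move=> Hw h1.
clearbody A B; apply/matrixP => i j; by rewrite !ord1 !mxE Hw h1 mulr1 subrr.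
Qed.

Theorem mainTheorem2 (R : realFieldType) (n : nat) (Sigma : finType)
  (delta : 'I_n -> Sigma -> 'I_n) (P : Sigma -> R) (alpha : 'rV[R]_n) :
  strongly_connected delta ->
  pos_distribution P ->
  stochastic alpha ->
  alpha *m (\sum_(a : Sigma) P a *: wmx R delta [:: a]) = alpha ->
  (synchronizing delta <->
   exists W : pred (seq Sigma), complete_for_full delta W alpha).
Proof.
move=> Hsc HP Hal Hst; split.
  move=> [w /eqP /cards1P [q0 Himg]].
  have Hq0 : forall p, dact delta p w = q0.
    move=> p; apply/set1P; rewrite -Himg; apply/imsetP; by exists p.
  pose u q := proj1_sig (constructive_indefinite_description _ (Hsc q0 q)).
  have Hu : forall q, dact delta q0 (u q) = q.
    by move=> q; rewrite /u; case: constructive_indefinite_description.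
  have E : forall q, alpha *m wmx R delta (w ++ u q) = delta_mx 0 q.
    move=> q; apply/matrixP => i j; rewrite !ord1 !mxE.
    under eq_bigr => p _ do rewrite mxE /dact foldl_cat -/(dact delta p w) Hq0 -/(dact delta q0 (u q)) Hu.
    by rewrite -mulr_suml Hal.2 mul1r eqxx /= eq_sym.
  exists predT => v.
  pose e := enum 'I_n.
  exists (map (fun q => w ++ u q) e), (map (fun q => v 0 q) e).
  split; first by rewrite all_predT.
  split; first by rewrite !size_map.
  rewrite {1}(row_sum_delta v).
  have -> : \sum_(j < n) v 0 j *: delta_mx 0 j = \sum_(j <- e) v 0 j *: delta_mx 0 j.
    by rewrite /e enumT.
  rewrite (big_nth q0) big_mkord size_map.
  apply: eq_bigr => i _.
  have Hi : (i < size e)%N := ltn_ord i.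
  by rewrite (@nth_map _ q0 _ _ _ _ _ Hi) (@nth_map _ q0 _ _ _ _ _ Hi) E.
move=> [W HW].
case: (classic (synchronizing delta)) => // Hns.
have [x [q1 [Hx Hw]]] := key HP Hal Hst Hns.
exfalso; have [s [c [_ [_ Hv]]]] := HW (delta_mx 0 q1).
have := congr1 (fun M => (M *m x) 0 0) Hv => /=.
rewrite mulmx_suml big1; last first.
  by move=> i _; rewrite -scalemxAl Hw scaler0.
rewrite -rowE !mxE => H; by rewrite H eqxx in Hx.
Qed.
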